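(* Let $T$ be a tree with root edge whose leaves are $1,\dots,m$, and let $L:G\to\mathcal{L}$ be a labeling function on a finite abelian group $G$. Let $J_{T,L}$ be the kernel of the $\mathbb{C}$-algebra homomorphism $$\mathbb{C}[q_{g}: g=(g_1,\dots,g_m)\in G^m]\to\mathbb{C}[a^{(e)}_l: e\in E(T),\, l\in\mathcal{L}],\qquad q_{g}\mapsto\prod_{e\in E(T)}a^{(e)}_{L(h_g(e))}.$$ Then the $\mathbb{C}$-vector space of polynomials of degree at most one lying in $J_{T,L}$ is spanned by all differences $q_{g}-q_{g'}$ with $g,g'\in G^m$ such that $L(h_g(e))=L(h_{g'}(e))$ for all edges $e\in E(T)$.
   Context: Let $G$ be a finite abelian group written additively, $\mathcal{L}$ a finite set, and $L:G\to\mathcal{L}$ any function (a labeling function). A tree with root edge is a finite tree $T$ with a distinguished leaf $\rho$; the unique edge $e_r$ at $\rho$ is the root edge. Every vertex $v\neq\rho$ has a unique parent edge (the first edge on the path from $v$ to $\rho$); the other edges at $v$ are its child edges. The leaves of $T$ other than $\rho$ are called the leaves of $T$; vertices that are neither $\rho$ nor leaves are interior vertices. $E(T)$ is the edge set. An edge $e'$ is below an edge $e$ if $e$ lies on the path from $\rho$ to $e'$ (in particular $e$ is below $e$). For $g=(g_1,\dots,g_m)\in G^m$, define $h_g:E(T)\to G$ by $h_g(e)=\sum_{i\in\Lambda(e)}g_i$, where $\Lambda(e)$ is the set of leaves $i$ whose incident edge is below $e$. All $a^{(e)}_l$ are distinct indeterminates. *)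

(* Defs.v *)
From HB Require Import structures.
From mathcomp Require Import all_boot all_order all_algebra.
From mathcomp Require Import multinomials.mpoly.
Set Implicit Arguments. Unset Strict Implicit. Unset Printing Implicit Defensive.
Import GRing.Theory.
Local Open Scope ring_scope.

(* A tree with root edge, encoded by its vertex set V, its root leaf [rho] and
   the parent map [par] (par v = the other endpoint of the parent edge of v,
   for v <> rho; by convention par rho = rho). *)
Definition is_tree_with_root_edge (V : finType) (rho : V) (par : V -> V) : Prop :=
  [/\ par rho = rho,
      (forall v : V, fconnect par v rho) &
      (* rho is a leaf: exactly one vertex has rho as its parent-neighbour *)
      #|[set v | (v != rho) && (par v == rho)]| = 1%N ].

(* Edges of T: an edge is identified with its lower endpoint v <> rho;
   the edge e_v joins v and par v. *)
Definition tedge (V : finType) (rho : V) := {v : V | v != rho}.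

Definition is_leaf (V : finType) (rho : V) (par : V -> V) (v : V) : bool :=
  (v != rho) && [forall w, (w != rho) ==> (par w != v)].

Definition leaf_labeling (V : finType) (rho : V) (par : V -> V) (m : nat)
    (leaf : 'I_m -> V) : Prop :=
  injective leaf /\ (forall v, is_leaf rho par v <-> exists i, leaf i = v).

(* The edge e_w is below e_v iff v lies on the path from w to rho,
   i.e. v is reached from w by iterating par. *)
Definition below (V : finType) (par : V -> V) (v w : V) : bool := fconnect par w v.

Definition hg (V : finType) (rho : V) (par : V -> V) (m : nat) (leaf : 'I_m -> V)
    (G : zmodType) (g : {ffun 'I_m -> G}) (e : tedge rho) : G :=
  \sum_(i < m | below par (val e) (leaf i)) g i.

Definition qidx (m : nat) (G : finZmodType) := {ffun 'I_m -> G}.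
Definition aidx (V : finType) (rho : V) (Lab : finType) := (tedge rho * Lab)%type.

Definition qvar (F : fieldType) (m : nat) (G : finZmodType) (g : qidx m G)
  : {mpoly F[#|{: qidx m G}|]} := 'X_(enum_rank g).

Definition avar (F : fieldType) (V : finType) (rho : V) (Lab : finType)
    (e : tedge rho) (l : Lab) : {mpoly F[#|{: aidx rho Lab}|]} :=
  'X_(enum_rank ((e, l) : aidx rho Lab)).

Definition qimage (F : fieldType) (V : finType) (rho : V) (par : V -> V) (m : nat)
    (leaf : 'I_m -> V) (G : finZmodType) (Lab : finType) (L : G -> Lab)
    (g : qidx m G) : {mpoly F[#|{: aidx rho Lab}|]} :=
  \prod_(e : tedge rho) avar F e (L (hg par leaf g e)).

Definition phiTL (F : fieldType) (V : finType) (rho : V) (par : V -> V) (m : nat)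
    (leaf : 'I_m -> V) (G : finZmodType) (Lab : finType) (L : G -> Lab)
    (p : {mpoly F[#|{: qidx m G}|]}) : {mpoly F[#|{: aidx rho Lab}|]} :=
  mmap (fun c : F => c%:MP)
       (fun i => qimage F rho par leaf L (enum_val i)) p.

Definition same_labels (V : finType) (rho : V) (par : V -> V) (m : nat)
    (leaf : 'I_m -> V) (G : finZmodType) (Lab : finType) (L : G -> Lab)
    (g g' : qidx m G) : bool :=
  [forall e : tedge rho, L (hg par leaf g e) == L (hg par leaf g' e)].

Arguments phiTL F {V} rho par {m} leaf {G Lab} L p.
Arguments qimage F {V} rho par {m} leaf {G Lab} L g.
Arguments same_labels {V} rho par {m} leaf {G Lab} L g g'.
Arguments qvar F {m G} g.

(* Main.v *)
Require Import Defs.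
From HB Require Import structures.
From mathcomp Require Import all_boot all_order all_algebra.
From mathcomp Require Import multinomials.mpoly.
Import GRing.Theory.
Local Open Scope ring_scope.

Section Aux.
Variable (F : fieldType) (K : finType).
Local Notation n := #|{: K}|.

Lemma decomp (p : {mpoly F[n]}) : (msize p <= 2)%N ->
  p = (p@_0%MM)%:MP + \sum_(g : K) p@_(U_(enum_rank g)) *: 'X_(enum_rank g).
Proof.
move=> hs; apply/mpolyP => mm.
rewrite mcoeffD mcoeffC raddf_sum /=.
under eq_bigr => g _ do rewrite mcoeffZ mcoeffX.
have [->|nz] := eqVneq mm 0%MM.
  rewrite mulr1n mulr1 big1 ?addr0 // => g _; by rewrite mnm1_eq0 mulr0n mulr0.
rewrite mulr0n mulr0 add0r.
case: (boolP (mdeg mm == 1%N)) => [/mdeg1P [i /eqP ->]| d1].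
  rewrite (bigD1 (enum_val i)) //= enum_valK eqxx mulr1 big1 ?addr0 // => g ne.
  rewrite eq_mnm1; case: eqP => [e|]; last by rewrite mulr0.
  by move: ne; rewrite -e enum_rankK eqxx.
have hd : (2 <= mdeg mm)%N.
  move: nz d1; rewrite -mdeg_eq0; case: (mdeg mm) => [|[|k]] //.
have /memN_msupp_eq0 -> := msize_mdeg_ge (leq_trans hs hd).
rewrite big1 // => g _; case: eqP => [e|]; last by rewrite mulr0.
by move: d1; rewrite -e mdeg1.
Qed.
End Aux.

Theorem proposition3p1 (F : fieldType) (V : finType) (rho : V) (par : V -> V)
    (Htree : is_tree_with_root_edge rho par)
    (m : nat) (leaf : 'I_m -> V) (Hleaf : leaf_labeling rho par leaf)
    (G : finZmodType) (Lab : finType) (L : G -> Lab)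
    (p : {mpoly F[#|{: qidx m G}|]}) :
  (msize p <= 2)%N /\ phiTL F rho par leaf L p = 0
  <->
  exists c : qidx m G -> qidx m G -> F,
    p = \sum_(g : qidx m G) \sum_(g' : qidx m G | same_labels rho par leaf L g g')
          c g g' *: (qvar F g - qvar F g').
Proof.
set K := qidx m G.
set A := aidx rho Lab.
pose lab (g : K) (e : tedge rho) := L (hg par leaf g e).
pose mu (g : K) : 'X_{1.. #|{: A}|} :=
  (\sum_(e : tedge rho) U_(enum_rank ((e, lab g e) : A)))%MM.
have qimE g : qimage F rho par leaf L g = 'X_[mu g].
  rewrite /qimage /mu; symmetry; apply: (big_morph (fun x => 'X_[x])).
    by move=> x y; rewrite mpolyXD.
  by rewrite mpolyX0.
have muE g e0 l : mu g (enum_rank ((e0, l) : A)) = (lab g e0 == l) :> nat.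
  rewrite /mu mnm_sumE (bigD1 e0) //= mnm1E (inj_eq enum_rank_inj) big1 ?addn0.
    by rewrite xpair_eqE eqxx.
  move=> e ne; rewrite mnm1E (inj_eq enum_rank_inj) xpair_eqE.
  by rewrite (negbTE ne).
have [e0 _] : exists e0 : tedge rho, true.
  case: Htree => _ _ hc.
  have : (0 < #|[set v | (v != rho) && (par v == rho)]|)%N by rewrite hc.
  case/card_gt0P => v; rewrite inE => /andP [hv _].
  by exists (exist _ v hv).
have mu0 g : mu g != 0%MM.
  apply/eqP => /mnmP /(_ (enum_rank ((e0, lab g e0) : A))).
  by rewrite muE eqxx mnm0E.
have sameE g g' : same_labels rho par leaf L g g' = (mu g == mu g').
  apply/idP/idP.
    move/forallP => h; apply/eqP; rewrite /mu; apply: eq_bigr => e _.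
    by rewrite /lab (eqP (h e)).
  move/eqP => h; apply/forallP => e.
  have := muE g' e (lab g e); rewrite -h muE eqxx eq_sym.
  by case: (lab g e == lab g' e).
have phiE (q : {mpoly F[#|{: K}|]}) :
    phiTL F rho par leaf L q = mmap (@mpolyC _ F) (fun i => qimage F rho par leaf L (enum_val i)) q.
  by [].
split.
  case=> hs hphi.
  pose c (g : K) := p@_(U_(enum_rank g)).
  have hp := @decomp F K p hs.
  have hphi2 : (p@_0%MM)%:MP + \sum_(g : K) c g *: 'X_[mu g] = 0.
    apply: etrans _ hphi; rewrite [in RHS]phiE [in RHS]hp mmapD mmapC raddf_sum /=; congr (_ + _).
    symmetry; under eq_bigr => g _ do rewrite mmapZ mmapX mmap1U enum_rankK qimE mul_mpolyC.
    by [].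
  have h0 : p@_0%MM = 0.
    have := congr1 (mcoeff 0%MM) hphi2.
    rewrite mcoeff0 mcoeffD mcoeffC eqxx mulr1 raddf_sum /= big1 ?addr0 //.
    by move=> g _; rewrite mcoeffZ mcoeffX (negbTE (mu0 g)) mulr0.
  have hcl g : \sum_(g' | mu g' == mu g) c g' = 0.
    have := congr1 (mcoeff (mu g)) hphi2.
    rewrite mcoeff0 mcoeffD mcoeffC (negbTE (mu0 g)) mulr0n mulr0 add0r.
    rewrite raddf_sum /= => h; rewrite big_mkcond /=; apply: etrans _ h; apply: eq_bigr => g' _.
    by rewrite mcoeffZ mcoeffX; case: eqP; rewrite ?mulr1 ?mulr0.
  pose g0 : K := [ffun => 0].
  pose R (g : K) : K := odflt g0 [pick g' | mu g' == mu g].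
  have muR g : mu (R g) = mu g.
    rewrite /R; case: pickP => [x /eqP //|/(_ g)]; by rewrite eqxx.
  have Req g g' : (R g == R g') = (mu g == mu g').
    apply/idP/idP => [/eqP h|/eqP h]; last by rewrite /R h.
    by rewrite -muR h muR.
  exists (fun g g' => if g' == R g then c g else 0).
  rewrite {1}hp h0 add0r.
  have -> : \sum_(g : K) \sum_(g' | same_labels rho par leaf L g g')
      (if g' == R g then c g else 0) *: (qvar F g - qvar F g')
      = \sum_(g : K) c g *: (qvar F g - qvar F (R g)).
    apply: eq_bigr => g _; rewrite (bigD1 (R g)) /=; last by rewrite sameE muR.
    rewrite eqxx big1 ?addr0 // => g' /andP [_ ne]; by rewrite (negbTE ne) scale0r.
  under [in RHS]eq_bigr => g _ do rewrite scalerBr.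
  rewrite sumrB.
  have -> : \sum_(g : K) c g *: qvar F (R g) = 0.
    rewrite (partition_big R predT) //=.
    apply: big1 => h _.
    rewrite (eq_bigr (fun g => c g *: qvar F h)); last by move=> g /eqP ->.
    rewrite -scaler_suml.
    case: (pickP (fun g => R g == h)) => [g1 /eqP e1|none].
      rewrite (eq_bigl (fun g => mu g == mu g1)) ?hcl ?scale0r // => g /=.
      by rewrite -e1 Req.
    by rewrite big_pred0 ?scale0r // => g /=; rewrite none.
  by rewrite subr0.
case=> c ->; split.
  apply: (big_ind (fun q => msize q <= 2)%N).
  - by rewrite msize0.
  - by move=> x y hx hy; apply: leq_trans (msizeD_le _ _) _; rewrite geq_max hx hy.
  move=> g _; apply: (big_ind (fun q => msize q <= 2)%N).
  - by rewrite msize0.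
  - by move=> x y hx hy; apply: leq_trans (msizeD_le _ _) _; rewrite geq_max hx hy.
  move=> g' _; apply: leq_trans (msizeZ_le _ _) _.
  apply: leq_trans (msizeD_le _ _) _; rewrite msizeN /qvar !msizeX !mdeg1.
  by rewrite maxnn.
rewrite phiE raddf_sum /=; apply: big1 => g _.
rewrite raddf_sum /=; apply: big1 => g' hs.
rewrite mmapZ mmapB !mmapX !mmap1U !enum_rankK.
move: hs; rewrite sameE => /eqP e; rewrite !qimE e.
by rewrite subrr mulr0.
Qed.
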